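(* Let $\beta,\gamma,\mu>0$, $0<p<\tfrac12$, $\delta=\beta/(\gamma+\mu)>4(1-p)$, and suppose $\frac{\gamma}{\mu}>F(\delta)$. Then the Jacobian at $E_1$ of the $(S_0,S_1,A)$ subsystem of the temporary adoption model has exactly one negative real eigenvalue, and its other two eigenvalues have positive real part (they are either both real and positive or a complex conjugate pair with positive real part). In particular $E_1$ has a two-dimensional unstable manifold.
   Context: The temporary adoption model is $S_0'=\mu-\beta S_0A-\mu S_0$, $S_1'=(1-p)\beta S_0A-\beta S_1A-\mu S_1$, $A'=\beta(pS_0+S_1)A-(\gamma+\mu)A$, $R'=\gamma A-\mu R$, with $S_0+S_1+A+R=1$. $E_1$ is the equilibrium with $A=A_1=\tfrac12(1+\tfrac{\gamma}{\mu})^{-1}\big[1-2\delta^{-1}+\sqrt{1-4(1-p)\delta^{-1}}\big]$, $S_0=1/(\delta(\frac{\gamma}{\mu}+1)A+1)$, $S_1=(1-p)\delta(\frac{\gamma}{\mu}+1)A/(\delta(\frac{\gamma}{\mu}+1)A+1)^2$, $R=\frac{\gamma}{\mu}A$. The function $F$ is $F(\delta)=\frac{\delta^2}{2(1-2p)}\cdot\frac{[1+\sqrt{1-4(1-p)\delta^{-1}}]^3}{(\delta-2)+\delta\sqrt{1-4(1-p)\delta^{-1}}}-1$. *)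

(* Defs.v *)
From Stdlib Require Import Reals Lra.
Open Scope R_scope.

Record Cx := mkCx { re : R; im : R }.
Definition Cof (x : R) : Cx := mkCx x 0.
Definition cadd (u v : Cx) : Cx := mkCx (re u + re v) (im u + im v).
Definition cneg (u : Cx) : Cx := mkCx (- re u) (- im u).
Definition csub (u v : Cx) : Cx := cadd u (cneg v).
Definition cmul (u v : Cx) : Cx :=
  mkCx (re u * re v - im u * im v) (re u * im v + im u * re v).
Definition czero : Cx := Cof 0.

(* 3x3 matrices, indices 0,1,2 (order: S0, S1, A). *)
Definition Mat3 := nat -> nat -> R.

Definition cdet3 (M : nat -> nat -> Cx) : Cx :=
  csub
   (cadd (cadd (cmul (M 0%nat 0%nat) (cmul (M 1%nat 1%nat) (M 2%nat 2%nat)))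
               (cmul (M 0%nat 1%nat) (cmul (M 1%nat 2%nat) (M 2%nat 0%nat))))
         (cmul (M 0%nat 2%nat) (cmul (M 1%nat 0%nat) (M 2%nat 1%nat))))
   (cadd (cadd (cmul (M 0%nat 2%nat) (cmul (M 1%nat 1%nat) (M 2%nat 0%nat)))
               (cmul (M 0%nat 0%nat) (cmul (M 1%nat 2%nat) (M 2%nat 1%nat))))
         (cmul (M 0%nat 1%nat) (cmul (M 1%nat 0%nat) (M 2%nat 2%nat)))).

Definition charpoly (J : Mat3) (z : Cx) : Cx :=
  cdet3 (fun i j => csub (if Nat.eqb i j then z else czero) (Cof (J i j))).

Definition is_eigenvalue (J : Mat3) (z : Cx) : Prop := charpoly J z = czero.

Definition delta (beta gamma mu : R) : R := beta / (gamma + mu).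

Definition F (p d : R) : R :=
  d ^ 2 / (2 * (1 - 2 * p)) *
  ((1 + sqrt (1 - 4 * (1 - p) / d)) ^ 3 /
   ((d - 2) + d * sqrt (1 - 4 * (1 - p) / d))) - 1.

Definition A1 (beta gamma mu p : R) : R :=
  let d := delta beta gamma mu in
  / 2 * / (1 + gamma / mu) * (1 - 2 / d + sqrt (1 - 4 * (1 - p) / d)).
Definition S0_1 (beta gamma mu p : R) : R :=
  let d := delta beta gamma mu in
  1 / (d * (gamma / mu + 1) * A1 beta gamma mu p + 1).
Definition S1_1 (beta gamma mu p : R) : R :=
  let d := delta beta gamma mu in
  let A := A1 beta gamma mu p in
  (1 - p) * d * (gamma / mu + 1) * A / (d * (gamma / mu + 1) * A + 1) ^ 2.
Definition R_1 (beta gamma mu p : R) : R := gamma / mu * A1 beta gamma mu p.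

(* Jacobian of the (S0, S1, A) subsystem
     S0' = mu - beta S0 A - mu S0
     S1' = (1-p) beta S0 A - beta S1 A - mu S1
     A'  = beta (p S0 + S1) A - (gamma + mu) A
   at the point (S0, S1, A). *)
Definition jac (beta gamma mu p S0 S1 A : R) : Mat3 := fun i j =>
  match i, j with
  | 0%nat, 0%nat => - beta * A - mu
  | 0%nat, 1%nat => 0
  | 0%nat, 2%nat => - beta * S0
  | 1%nat, 0%nat => (1 - p) * beta * A
  | 1%nat, 1%nat => - beta * A - mu
  | 1%nat, 2%nat => (1 - p) * beta * S0 - beta * S1
  | 2%nat, 0%nat => beta * p * A
  | 2%nat, 1%nat => beta * A
  | 2%nat, 2%nat => beta * (p * S0 + S1) - (gamma + mu)
  | _, _ => 0
  end.

Definition jac_E1 (beta gamma mu p : R) : Mat3 :=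
  jac beta gamma mu p (S0_1 beta gamma mu p) (S1_1 beta gamma mu p)
      (A1 beta gamma mu p).

(* Main.v *)
Require Import Defs.
From Stdlib Require Import Reals Lra Psatz.
Open Scope R_scope.
Definition c2 (J:Mat3) := -(J 0%nat 0%nat + J 1%nat 1%nat + J 2%nat 2%nat).
Definition c1 (J:Mat3) := J 0%nat 0%nat * J 1%nat 1%nat - J 0%nat 1%nat * J 1%nat 0%nat
  + J 0%nat 0%nat * J 2%nat 2%nat - J 0%nat 2%nat * J 2%nat 0%nat
  + J 1%nat 1%nat * J 2%nat 2%nat - J 1%nat 2%nat * J 2%nat 1%nat.
Definition c0 (J:Mat3) := -(J 0%nat 0%nat * (J 1%nat 1%nat * J 2%nat 2%nat - J 1%nat 2%nat * J 2%nat 1%nat)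
  - J 0%nat 1%nat * (J 1%nat 0%nat * J 2%nat 2%nat - J 1%nat 2%nat * J 2%nat 0%nat)
  + J 0%nat 2%nat * (J 1%nat 0%nat * J 2%nat 1%nat - J 1%nat 1%nat * J 2%nat 0%nat)).

Lemma factor J lam : lam^3 + c2 J * lam^2 + c1 J * lam + c0 J = 0 -> forall z,
  charpoly J z = cmul (csub z (Cof lam)) (cadd (csub (cmul z z) (cmul (Cof (-(c2 J + lam))) z)) (Cof (c1 J + lam*(c2 J + lam)))).
Proof.
  intros H [a b]. unfold c2, c1, c0 in *.
  unfold charpoly, cdet3, csub, cadd, cneg, cmul, Cof, czero; simpl.
  f_equal; lra.
Qed.

Lemma cubic_root a2 a1 a0 : 0 < a2 -> 0 < a0 -> a2*a1 < a0 ->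
  exists lam, lam < -a2 /\ lam^3 + a2*lam^2 + a1*lam + a0 = 0.
Proof.
  intros H2 H0 H1.
  set (f := fun t => t^3 + a2*t^2 + a1*t + a0).
  set (L := 1 + a2 + Rabs a1 + a0).
  assert (HL1 : 1 <= L) by (unfold L; pose proof (Rabs_pos a1); lra).
  assert (Hc : continuity f) by (unfold f; reg).
  assert (Hfa : f (-L) < 0).
  { unfold f. pose proof (Rabs_pos a1). pose proof (Rle_abs (-a1)). rewrite Rabs_Ropp in H3.
    assert (L*L >= L) by nra.
    assert (L^3 = L*(L*L)) by ring.
    assert (-L^3 + a2*L^2 - a1*L + a0 < 0).
    { assert (L*(L*L) >= (1 + a2 + Rabs a1 + a0) * (L*L)) by (unfold L at 1; lra).
      nra. }
    replace ((-L)^3 + a2*(-L)^2 + a1*(-L) + a0) with (-L^3 + a2*L^2 - a1*L + a0) by ring. lra. }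
  assert (Hfb : 0 < f (-a2)) by (unfold f; nra).
  assert (Hlt : -L < -a2) by (unfold L; pose proof (Rabs_pos a1); lra).
  destruct (IVT f (-L) (-a2) Hc Hlt Hfa Hfb) as [z [[_ Hz2] Hz]].
  exists z. split.
  - destruct Hz2 as [Hz2|Hz2]; [exact Hz2|]. subst z. lra.
  - exact Hz.
Qed.

Lemma quad_re s q z : 0 < s -> 0 < q ->
  cadd (csub (cmul z z) (cmul (Cof s) z)) (Cof q) = czero -> 0 < re z.
Proof.
  destruct z as [a b]; intros Hs Hq H.
  unfold cadd, csub, cneg, cmul, Cof, czero in H; simpl in *.
  injection H as H1 H2.
  assert (Hb: b = 0 \/ 2*a = s) by (destruct (Req_dec b 0); [left; auto| right; nra]).
  destruct Hb as [->|Hb]; nra.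
Qed.

Theorem mainTheorem9 (beta gamma mu p : R) :
  0 < beta -> 0 < gamma -> 0 < mu -> 0 < p < 1 / 2 ->
  delta beta gamma mu > 4 * (1 - p) ->
  gamma / mu > F p (delta beta gamma mu) ->
  exists lam s q : R,
    lam < 0 /\
    (forall z : Cx,
       charpoly (jac_E1 beta gamma mu p) z =
       cmul (csub z (Cof lam))
            (cadd (csub (cmul z z) (cmul (Cof s) z)) (Cof q))) /\
    (forall z : Cx,
       cadd (csub (cmul z z) (cmul (Cof s) z)) (Cof q) = czero -> 0 < re z).
Proof.
  intros Hb Hg Hm Hp Hd HF.
  set (d := delta beta gamma mu) in *.
  assert (Hdd : d = beta / (gamma + mu)) by reflexivity.
  assert (Hd0 : 0 < d) by lra.
  set (w := 1 - 4 * (1 - p) / d).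
  assert (Hdw : d * w = d - 4*(1-p)) by (unfold w; field; lra).
  assert (Hw : 0 < w) by nra.
  set (s0 := sqrt w).
  assert (Hs0 : 0 <= s0) by apply sqrt_pos.
  assert (Hss : s0 * s0 = w) by (apply sqrt_sqrt; lra).
  set (x := (d - 2 + d * s0) / 2).
  assert (Hx : 1 - 2*p < x) by (unfold x; nra).
  assert (Hx0 : 0 < x) by lra.
  assert (Hrel : (x+1)^2 = d*(x+p)) by (unfold x; nra).
  assert (HB : d * (gamma/mu + 1) = beta / mu) by (rewrite Hdd; field; lra).
  assert (HA : Defs.A1 beta gamma mu p = mu * x / beta).
  { unfold Defs.A1; fold d; fold w; fold s0.
    replace (1 - 2/d + s0) with (2*x/d) by (unfold x; field; lra).
    replace (1 + gamma/mu) with (d * (gamma/mu+1) / d) by (field; lra).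
    rewrite HB. field; lra. }
  assert (HK : d * (gamma/mu + 1) * Defs.A1 beta gamma mu p = x) by (rewrite HB, HA; field; lra).
  assert (HS0 : S0_1 beta gamma mu p = 1/(x+1)) by (unfold S0_1; fold d; rewrite HK; reflexivity).
  assert (HS1 : S1_1 beta gamma mu p = (1-p)*x/(x+1)^2) by (unfold S1_1; fold d; replace ((1-p)*d*(gamma/mu+1)*Defs.A1 beta gamma mu p) with ((1-p)*(d*(gamma/mu+1)*Defs.A1 beta gamma mu p)) by ring; rewrite HK; reflexivity).
  assert (HFx : F p d = 2*(x+1)^3/(d*(1-2*p)*x) - 1).
  { unfold F. fold w. fold s0.
    replace (1 + s0) with (2*(x+1)/d) by (unfold x; field; lra).
    replace (d - 2 + d * s0) with (2*x) by (unfold x; field).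
    field. repeat split; lra. }
  assert (Hkey : beta * (1 - 2*p) * x > 2 * mu * (x+1)^3).
  { rewrite HFx in HF.
    assert (H1 : gamma/mu + 1 > 2*(x+1)^3/(d*(1-2*p)*x)) by lra.
    assert (H2 : 0 < d*(1-2*p)*x) by (apply Rmult_lt_0_compat; [|lra]; nra).
    apply (Rmult_lt_compat_l (d*(1-2*p)*x)) in H1; [|exact H2].
    replace (d*(1-2*p)*x * (2*(x+1)^3/(d*(1-2*p)*x))) with (2*(x+1)^3) in H1 by (field; lra).
    replace (d*(1-2*p)*x*(gamma/mu+1)) with (d*(gamma/mu+1)*(1-2*p)*x) in H1 by ring.
    rewrite HB in H1.
    apply (Rmult_lt_compat_l mu) in H1; [|lra].
    replace (mu * (beta/mu*(1-2*p)*x)) with (beta*(1-2*p)*x) in H1 by (field; lra).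
    lra. }
  set (J := jac_E1 beta gamma mu p).
  assert (E00 : J 0%nat 0%nat = - mu*(x+1)) by (unfold J, jac_E1, jac; rewrite HA; field; lra).
  assert (E01 : J 0%nat 1%nat = 0) by reflexivity.
  assert (E02 : J 0%nat 2%nat = - beta/(x+1)) by (unfold J, jac_E1, jac; rewrite HS0; field; lra).
  assert (E10 : J 1%nat 0%nat = (1-p)*mu*x) by (unfold J, jac_E1, jac; rewrite HA; field; lra).
  assert (E11 : J 1%nat 1%nat = - mu*(x+1)) by (unfold J, jac_E1, jac; rewrite HA; field; lra).
  assert (E12 : J 1%nat 2%nat = beta*(1-p)/(x+1)^2) by (unfold J, jac_E1, jac; rewrite HS0, HS1; field; lra).
  assert (E20 : J 2%nat 0%nat = p*mu*x) by (unfold J, jac_E1, jac; rewrite HA; field; lra).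
  assert (E21 : J 2%nat 1%nat = mu*x) by (unfold J, jac_E1, jac; rewrite HA; field; lra).
  assert (E22 : J 2%nat 2%nat = 0).
  { unfold J, jac_E1, jac; rewrite HS0, HS1.
    assert (Hgm : gamma + mu = beta / d) by (rewrite Hdd; field; lra).
    rewrite Hgm.
    replace (p * (1 / (x + 1)) + (1 - p) * x / (x + 1) ^ 2) with ((x+p)/(x+1)^2) by (field; lra).
    replace ((x+1)^2) with (d*(x+p)). field. split; lra. }
  assert (Hc2 : c2 J = 2*mu*(x+1)) by (unfold c2; rewrite E00, E11, E22; ring).
  assert (Hc0 : c0 J = beta*mu^2*x*(x+2*p-1)/(x+1)).
  { unfold c0; rewrite E00, E01, E02, E10, E11, E12, E20, E21, E22; field; lra. }
  assert (Hdiff : c0 J - c2 J * c1 J = mu^2*(beta*x*(1-2*p) - 2*mu*(x+1)^3)).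
  { rewrite Hc0, Hc2; unfold c1; rewrite E00, E01, E02, E10, E11, E12, E20, E21, E22; field; lra. }
  assert (P2 : 0 < c2 J) by (rewrite Hc2; nra).
  assert (P0 : 0 < c0 J).
  { rewrite Hc0. apply Rdiv_lt_0_compat; [|lra].
    apply Rmult_lt_0_compat; [|lra]. apply Rmult_lt_0_compat; [|lra]. apply Rmult_lt_0_compat; [lra | apply pow_lt; lra]. }
  assert (P1 : c2 J * c1 J < c0 J).
  { assert (0 < mu^2*(beta*x*(1-2*p) - 2*mu*(x+1)^3)) by (apply Rmult_lt_0_compat; [apply pow_lt; lra | lra]). lra. }
  destruct (cubic_root _ _ _ P2 P0 P1) as [lam [Hlam Hroot]].
  exists lam, (-(c2 J + lam)), (c1 J + lam*(c2 J + lam)).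
  split; [lra|]. split.
  - apply factor. exact Hroot.
  - intros z Hz. apply (quad_re (-(c2 J + lam)) (c1 J + lam*(c2 J + lam))); [lra| |exact Hz].
    assert (Hq : -lam * (c1 J + lam*(c2 J + lam)) = c0 J) by nra.
    nra.
Qed.
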